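(* Let $n\ge 2$ and let $p(x)=x^{2n+1}-m_{2n}x^{2n}+m_{2n-1}x^{2n-1}+\cdots+m_1x-1$ with $m_j\in\mathbb Z$, and let $x_0,\dots,x_{2n}\in\mathbb C$ be the roots of $p$. If $x_0\in\mathbb R$ is a simple root and $|x_1|=\cdots=|x_{2n}|$, then $x_0=1$ and $|x_j|=1$ for $j=1,\dots,2n$. *)

(* Defs.v *)
From mathcomp Require Import all_boot all_order all_algebra all_field.
Set Implicit Arguments.
Unset Strict Implicit.
Unset Printing Implicit Defensive.

(* Main.v *)
Require Import Defs.
From HB Require Import structures.
From mathcomp Require Import all_boot all_order all_algebra all_field.
From mathcomp Require Import ring zify.
Import Order.TTheory GRing.Theory Num.Theory.
Local Open Scope ring_scope.
Lemma cancel_pow (r : algC) m k : 0 <= r -> r != 0 -> (0 < k)%N ->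
  r ^+ (m + k) = r ^+ m -> r = 1.
Proof.
move=> r0 rn0 k0; rewrite exprD => H.
have : r ^+ m * (r ^+ k - 1) == 0 by rewrite mulrBr H mulr1 subrr.
rewrite mulf_eq0 expf_eq0 (negbTE rn0) andbF /= subr_eq0 pexpr_eq1 //.
by move/eqP.
Qed.

Lemma key_real (a r b c : algC) (n : nat) : (2 <= n)%N -> 0 <= r ->
  a * r ^+ (2 * n) = 1 -> (b = a \/ b = r) -> (c = a \/ c = r) ->
  (b * c) ^+ (2 * n) * r ^+ 2 = 1 -> r = 1.
Proof.
move=> n2 r0 Ha.
have rn0 : r != 0.
  apply/eqP=> r0'; move: Ha; rewrite r0' expr0n muln_eq0 /=.
  by case: n n2 => // n _; rewrite mulr0 => /eqP; rewrite eq_sym oner_eq0.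
set T := r ^+ (2 * n) in Ha.
have case2 : (a * r) ^+ (2 * n) * r ^+ 2 = 1 -> r = 1.
  move=> E; apply: (@cancel_pow r (2 * n + 2) (2 * n * (2 * n) - (2 * n + 2))) => //.
    rewrite subn_gt0; nia.
  rewrite subnKC; last by nia.
  rewrite exprM -/T exprD -/T.
  by rewrite -[LHS]mulr1 -E exprMn -/T [T ^+ _ * _]mulrA [T ^+ _ * _]mulrA -exprMn (mulrC T a) Ha expr1n mul1r.
case=> ->; case=> -> E.
- apply: (@cancel_pow r 2 (2 * n * (2 * n) * 2 - 2)) => //.
    rewrite subn_gt0; nia.
  rewrite subnKC; last by nia.
  rewrite exprM exprM -/T -[LHS]mulr1 -E exprMn -(expr2 (a ^+ (2 * n))).
  by rewrite [(T ^+ _) ^+ 2 * _]mulrA -exprMn -[T ^+ _ * _]exprMn (mulrC T a) Ha !expr1n mul1r.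
- exact: case2.
- by apply: case2; rewrite [r * a]mulrC in E.
- move: E; rewrite -expr2 -exprM -exprD => /eqP; rewrite pexpr_eq1 //; last by nia.
  by move/eqP.
Qed.
Local Notation pQtoC := (map_poly (ratr : rat -> algC)).
Lemma aut_exists (z y : algC) : root (minCpoly z) y ->
  {nu : {rmorphism algC -> algC} | nu z = y}.
Proof.
move=> yr.
have [q [Dq monq] dvq] := minCpolyP z.
have [r Dr] := closed_field_poly_normal (minCpoly z).
rewrite (monicP (minCpoly_monic z)) scale1r in Dr.
have [Qn [QnC [rr Drr genQn]]] := num_field_exists r.
have inr w : root (minCpoly z) w -> {wn | QnC wn = w}.
  rewrite Dr root_prod_XsubC -Drr => /mapP/sig2_eqW[wn _ ->]; by exists wn.
have [zn Dz] := inr z (root_minCpoly z).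
have [yn Dy] := inr y yr.
pose pr := map_poly (in_alg Qn) q.
have prC : map_poly QnC pr = pQtoC q.
  rewrite -map_poly_comp; apply: eq_map_poly => a.
  by rewrite /= rmorphZ_num rmorph1 mulr1.
have hom1: kHom 1 1 (\1%VF : 'End(Qn)) by rewrite kHom1.
have pzy: root (map_poly \1%VF (minPoly 1 zn)) yn.
  rewrite -(fmorph_root QnC) /= Dy -map_poly_comp.
  rewrite (@eq_map_poly _ _ _ QnC) => [|a]; last by rewrite /= id_lfunE.
  set p1 := map_poly _ _.
  have [q1 Dp1]: exists q1, p1 = pQtoC q1.
    have aP i: (minPoly 1 zn)`_i \in 1%VS.
      by apply/polyOverP; apply: minPolyOver.
    have{aP} a_ i := sig_eqW (vlineP _ _ (aP i)).
    exists (\poly_(i < size (minPoly 1 zn)) sval (a_ i)).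
    apply/polyP=> i; rewrite coef_poly coef_map coef_poly /=.
    case: ifP => _; rewrite ?rmorph0 //; case: (a_ i) => a /= ->.
    by rewrite alg_num_field fmorph_rat.
  have: root p1 z by rewrite -Dz fmorph_root root_minPoly.
  rewrite Dp1 dvq; case/dvdpP=> r1 ->; rewrite rmorphM rootM /= -Dq.
  by rewrite yr orbT.
pose phi := kHomExtend 1 \1 zn yn.
have homphi : kHom 1 <<1; zn>> phi := kHomExtendP (subvv _) hom1 pzy.
have Qpr : pr \is a polyOver 1%VS.
  by apply/polyOverP=> i; rewrite coef_map memvZ ?memv_line.
have splitQr : splittingFieldFor <<1; zn>>%AS pr fullv.
  apply: splittingFieldForS (sub1v (Sub <<1; zn>>%VS _)) (subvf _) _; exists rr => //.
  congr (_ %= _): (eqpxx pr); apply/(map_poly_inj QnC).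
  rewrite prC -Dq Dr -Drr big_map rmorph_prod /=; apply: eq_bigr => w _.
  by rewrite map_polyXsubC.
have [g homg Dg] := kHom_extends (sub1v _) homphi Qpr splitQr.
have gm : monoid_morphism g by apply/kHom_monoid_morphism.
pose gmM := GRing.isMonoidMorphism.Build _ _ g gm.
pose gRM : {rmorphism Qn -> Qn} := HB.pack (fun_of_lfun g) gmM.
have [nu Dnu] := extend_algC_subfield_aut QnC gRM.
exists nu; rewrite -Dz -Dnu /= -Dg ?memv_adjoin //.
by rewrite (kHomExtend_val hom1 pzy) Dy.
Qed.
Lemma other_root (x : algC) : x \notin Crat -> {y | root (minCpoly x) y & y != x}.
Proof.
move=> xQ.
have [r Dr] := closed_field_poly_normal (minCpoly x).
rewrite (monicP (minCpoly_monic x)) scale1r in Dr.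
case: (boolP (has (predC1 x) r)) => [/hasP/sig2_eqW[y yr yx] | ].
  by exists y; rewrite // Dr root_prod_XsubC.
rewrite -all_predC => /allP allx.
exfalso; move/negP: xQ; apply.
have [q [Dq _] _] := minCpolyP x.
have szr : size r != 0%N.
  have := size_minCpoly x; rewrite Dr size_prod_XsubC.
  by case: (size r).
have := coefPn_prod_XsubC szr; rewrite -Dr Dq coef_map /=.
rewrite (eq_big_seq (fun _ => x)); last first.
  by move=> w /allx /=; rewrite negbK => /eqP ->.
rewrite big_const_seq count_predT iter_addr_0 => Ex.
have -> : x = - ratr q`_(size r).-1 / (size r)%:R.
  rewrite Ex opprK -[x *+ _]mulr_natr mulfK // pnatr_eq0; by case: (size r) szr.
by rewrite rpredM ?rpredN ?rpredV ?rpred_nat ?Crat_rat.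
Qed.
Theorem lemma3p5 (n : nat) (p : {poly int}) (x : 'I_(2 * n).+1 -> algC) :
  (2 <= n)%N ->
  p \is monic ->
  size p = (2 * n + 2)%N ->
  p`_0 = -1 ->
  map_poly (intr : int -> algC) p = \prod_(i < (2 * n).+1) ('X - (x i)%:P) ->
  x ord0 \is Num.real ->
  (forall i : 'I_(2 * n).+1, i != ord0 -> x i != x ord0) ->
  (forall i j : 'I_(2 * n).+1, i != ord0 -> j != ord0 -> `|x i| = `|x j|) ->
  x ord0 = 1 /\ (forall i : 'I_(2 * n).+1, i != ord0 -> `|x i| = 1).
Proof.
move=> n2 monp szp p0 HP x0R xne xnorm.
set P := map_poly _ p in HP.
set x0 := x ord0.
have rootP a : root P a -> exists i, a = x i.
  by rewrite HP -(big_map x predT (fun z => 'X - z%:P)) root_prod_XsubC => /mapP[i _ ->]; exists i.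
have rootx i : root P (x i).
  by rewrite HP -(big_map x predT (fun z => 'X - z%:P)) root_prod_XsubC map_f ?mem_index_enum.
have autP (nu : {rmorphism algC -> algC}) a : root P a -> root P (nu a).
  move=> Ha; have E : map_poly nu P = P.
    by rewrite /P -map_poly_comp; apply: eq_map_poly => b /=; rewrite rmorph_int.
  by rewrite -E fmorph_root.
pose j0 : 'I_(2 * n).+1 := inord 1.
have j0n0 : j0 != ord0.
  by apply/eqP => /(congr1 val); rewrite /= inordK //; nia.
set r := `|x j0|.
have modr i : i != ord0 -> `|x i| = r by move=> ?; apply: xnorm.
have dich a : root P a -> a = x0 \/ `|a| = r.
  move/rootP => [i ->]; case: (eqVneq i ord0) => [->|/modr]; by [left|right].
have prod1 : x0 * \prod_(i < 2 * n) x (lift ord0 i) = 1.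
  have := congr1 (fun q => q.[0]) HP; rewrite /= horner_coef0 coef_map p0 /=.
  rewrite horner_prod (eq_bigr (fun i => - x i)); last first.
    by move=> i _; rewrite hornerXsubC sub0r.
  rewrite prodrN card_ord big_ord_recl exprS exprM sqrrN expr1n expr1n mulr1.
  by move/eqP; rewrite mulN1r rmorphN rmorph1 eqr_opp => /eqP <-.
have normprod : `|x0| * r ^+ (2 * n) = 1.
  have := congr1 (fun q : algC => `|q|) prod1; rewrite normrM normr1 normr_prod.
  rewrite (eq_bigr (fun _ => r)); last by move=> i _; rewrite modr // neq_lift.
  by rewrite prodr_const card_ord.
have r0 : 0 <= r by apply: normr_ge0.
have r1 : r = 1.
  have [x0Q | x0nQ] := boolP (x0 \in Crat).
  - have PZ : P \is a polyOver Num.int.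
      by apply/polyOverP => i; rewrite /P coef_map intr_int.
    have monP : P \is monic by rewrite /P monic_map.
    have x0A : x0 \in Aint := root_monic_Aint (rootx ord0) monP PZ.
    have x0Z := Cint_rat_Aint x0Q x0A.
    move: prod1; set y := \prod_(i < 2 * n) _ => prod1.
    have yA : y \in Aint.
      by apply: rpred_prod => i _; exact: root_monic_Aint (rootx _) monP PZ.
    have x0n0 : x0 != 0.
      by apply/eqP => e; move: prod1; rewrite e mul0r => /eqP; rewrite eq_sym oner_eq0.
    have yn0 : y != 0.
      by apply/eqP => e; move: prod1; rewrite e mulr0 => /eqP; rewrite eq_sym oner_eq0.
    have yQ : y \in Crat by rewrite -(mulKf x0n0 y) prod1 mulr1 rpredV.
    have yZ := Cint_rat_Aint yQ yA.
    have h1 := norm_intr_ge1 x0Z x0n0; have h2 := norm_intr_ge1 yZ yn0.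
    have h3 : `|x0| * `|y| = 1 by rewrite -normrM prod1 normr1.
    have ax : `|x0| = 1.
      apply/eqP; rewrite eq_le h1 andbT -h3 ler_peMr //.
    have n0 : (0 < 2 * n)%N by rewrite muln_gt0 /= (leq_trans _ n2).
    by move: normprod; rewrite ax mul1r => /eqP; rewrite (pexpr_eq1 n0 r0) => /eqP.
  - have [y ry yx] := @other_root x0 x0nQ.
    have [nu Dnu] := @aut_exists _ _ ry.
    have Py : root P y by rewrite -Dnu; apply: autP; apply: rootx.
    have ny : `|y| = r by case: (dich y Py) => // e; rewrite e eqxx in yx.
    set z := x j0.
    have Pzc : root P z^* by apply: (autP Num.Def.conjC); apply: rootx.
    have E0 : (z * z^*) ^+ (2 * n) * x0 ^+ 2 = 1.
      rewrite -normCK -/r -(real_normK x0R) exprAC mulrC -exprMn.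
      by rewrite normprod expr1n.
    have E1 := congr1 nu E0; rewrite rmorph1 rmorphM !rmorphXn rmorphM Dnu in E1.
    have E2 := congr1 (fun q : algC => `|q|) E1.
    rewrite /= normrM !normrX normrM normr1 ny in E2.
    apply: (@key_real _ _ _ _ _ n2 r0 normprod _ _ E2).
      by case: (dich _ (autP nu _ (rootx j0))) => ->; [left|right].
    by case: (dich _ (autP nu _ Pzc)) => ->; [left|right].
have ax0 : `|x0| = 1 by move: normprod; rewrite r1 expr1n mulr1.
have : x0 ^+ 2 == 1 by rewrite -(real_normK x0R) ax0 expr1n.
rewrite sqrf_eq1 => /orP[/eqP x01 | /eqP x0m1]; last first.
  exfalso.
  pose G := \prod_(i < 2 * n) ('X - (x (lift ord0 i))%:P).
  have PG : P = ('X - x0%:P) * G by rewrite HP big_ord_recl.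
  have dP : P^`().[x0] = G.[x0].
    by rewrite PG derivM derivXsubC mul1r hornerD hornerM hornerXsubC subrr mul0r addr0.
  have GZ : G.[x0] \is a Num.int.
    rewrite -dP; have -> : x0 = ((-1 : int)%:~R) by rewrite x0m1 rmorphN1.
    by rewrite /P deriv_map horner_map intr_int.
  have GR := Rreal_int GZ.
  move: GZ GR dP; set g := G.[x0] => GZ GR dP.
  have gE : g = \prod_(i < 2 * n) (x0 - x (lift ord0 i)).
    by rewrite /g /G horner_prod; apply: eq_bigr => i _; rewrite hornerXsubC.
  have ys : \prod_(i < 2 * n) x (lift ord0 i) = -1.
    by move: prod1; rewrite x0m1 mulN1r => /eqP; rewrite eqr_oppLR => /eqP.
  have gg : g = - g^*.
    rewrite gE (rmorph_prod Num.Def.conjC) /= -mulN1r -ys -big_split /=.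
    apply: eq_bigr => i _.
    rewrite rmorphB /= x0m1 rmorphN1 mulrBr mulrN1 -normCK modr ?neq_lift //.
    by rewrite r1 expr1n addrC.
  move: gg; rewrite conj_Creal // => /eqP; rewrite -addr_eq0 -mulr2n mulrn_eq0 /=.
  rewrite gE => /prodf_eq0[i _]; rewrite subr_eq0 eq_sym => /eqP.
  have li : lift ord0 i != ord0 by rewrite eq_sym neq_lift.
  by move=> e; move: (xne _ li); rewrite -/x0 -e eqxx.
split=> // i i0; by rewrite modr.
Qed.
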